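(* Let $s\ge 3$ and $1\le i\le s-1$, and put $J=\lfloor (s-i+1)/2\rfloor$. Then for all $0\le j\le J$ we have $|\lambda_{i,j}|\le|\lambda_{i,J}|$, with equality if and only if either $j=J$, or $s$ is odd, $i=1$ and $j=0$.
   Context: $|\mu|$ denotes the size (sum of parts) of a partition $\mu$. For a finite set $\{h_1>h_2>\cdots>h_m\}$ of positive integers, the unique partition with this $\beta$-set (set of first-column hook lengths) is $(h_1-(m-1),h_2-(m-2),\ldots,h_m)$, of size $\sum_i h_i-\binom{m}{2}$. For $s\ge 3$, $1\le i\le s-1$, define $\beta_{i,0}=\bigcup_{k\ge 0}\{i+1+k(s+2),\ldots,(k+1)s-1\}$ (empty intervals omitted), and for $1\le j\le\lfloor(s-i+1)/2\rfloor$ define $\beta_{i,j}=\beta_{i,0}\cup\{i+p(s+2): 0\le p\le j-1\}$. Let $\lambda_{i,j}$ be the unique partition whose $\beta$-set is $\beta_{i,j}$. *)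

(* Defs.v *)
From mathcomp Require Import all_boot.
Set Implicit Arguments. Unset Strict Implicit. Unset Printing Implicit Defensive.

(* The partition whose beta-set (set of first-column hook lengths) is the
   finite set of positive integers b: with b = {h_1 > ... > h_m},
   the partition is (h_1-(m-1), h_2-(m-2), ..., h_m). *)
Definition partition_of_beta (b : seq nat) : seq nat :=
  let h := sort geq (undup b) in
  [seq nth 0 h l - (size h - 1 - l) | l <- iota 0 (size h)].

Definition psize (mu : seq nat) : nat := sumn mu.

(* The interval for k is nonempty only when i+2+2k <= s, so k < s
   suffices; for k >= s the intervals are empty. *)
Definition beta0 (s i : nat) : seq nat :=
  flatten [seq iota (i + 1 + k * (s + 2)) ((k + 1) * s - (i + 1 + k * (s + 2)))
          | k <- iota 0 s].

Definition beta (s i j : nat) : seq nat :=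
  undup (beta0 s i ++ [seq i + p * (s + 2) | p <- iota 0 j]).

Definition lambda (s i j : nat) : seq nat := partition_of_beta (beta s i j).

(* Main.v *)
Require Import Defs.
From mathcomp Require Import all_boot zify.

Lemma head_big (x : nat) h : sorted geq (x :: h) -> uniq (x :: h) -> all (fun y => 0 < y) (x :: h) -> size h < x.
Proof.
elim: h x => [|y h IH] x /=; first by move=> _ _ /andP[].
move=> /andP[yx sh] /andP[xn uh] /andP[x0 ay].
have : size h < y by apply: IH => //.
rewrite inE negb_or in xn; case/andP: xn => xy _.
move: yx xy => /= yx xy. have : y < x by rewrite ltn_neqAle eq_sym xy yx.
lia.
Qed.

Lemma psum_gen h : sorted geq h -> uniq h -> all (fun y => 0 < y) h ->
  2 * sumn [seq nth 0 h l - (size h - 1 - l) | l <- iota 0 (size h)] + size h * (size h - 1) = 2 * sumn h.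
Proof.
elim: h => [|x h IH] //= Hs Hu Ha.
have hb := @head_big x h Hs Hu Ha.
have := IH (path_sorted Hs) (andP Hu).2 (andP Ha).2.
have E : iota 1 (size h) = [seq 1 + l | l <- iota 0 (size h)] by rewrite -iotaDl.
rewrite E -map_comp /=.
rewrite (@eq_map _ _ _ (fun l => nth 0 h l - (size h - 1 - l))); last first.
  move=> l /=. rewrite add0n subnDA subn1 /=; lia.
set S := sumn [seq _ | _ <- _].
move: hb. rewrite subn1 /=. set n := size h. case: n => [|m] /=; rewrite ?subn0 ?subSS ?subn0; lia.
Qed.

Section Flat.
Variables (a len : nat -> nat).
Hypothesis Ha : forall k, a k + len k <= a k.+1.
Let F n := flatten [seq iota (a k) (len k) | k <- iota 0 n].
Lemma flat_bound n x : x \in F n -> x < a n.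
Proof.
elim: n x => [|n IH] x //. rewrite /F -addn1 iotaD map_cat flatten_cat mem_cat.
rewrite addn1 add0n.
case/orP => [/IH|]; have := Ha n; first lia.
rewrite /= cats0 mem_iota. lia.
Qed.
Lemma flat_uniq n : uniq (F n).
Proof.
elim: n => [|n IH] //. rewrite /F -addn1 iotaD map_cat flatten_cat cat_uniq add0n.
rewrite IH /= cats0 iota_uniq andbT. apply/hasPn => x.
rewrite mem_iota => /andP[h _]. apply/negP => /flat_bound. lia.
Qed.
End Flat.

Lemma mem_beta0 s i x : x \in beta0 s i -> exists k, i + 1 + k * (s + 2) <= x < (k + 1) * s.
Proof.
case/flattenP => l /mapP[k _ ->]. rewrite mem_iota => h. exists k. lia.
Qed.

Lemma beta0_uniq s i : uniq (beta0 s i).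
Proof.
apply: (@flat_uniq (fun k => i + 1 + k * (s + 2)) (fun k => (k + 1) * s - (i + 1 + k * (s + 2)))) => k. lia.
Qed.

Lemma new_notin s i p : i + p * (s + 2) \notin beta0 s i.
Proof.
apply/negP => /mem_beta0 [k hk].
case: (ltnP k p) => kp.
  have : (k + 1) * s <= p * s by apply: leq_mul; lia.
  lia.
have : p * (s + 2) <= k * (s + 2) by apply: leq_mul.
lia.
Qed.

Lemma B_uniq s i j : uniq (beta0 s i ++ [seq i + p * (s + 2) | p <- iota 0 j]).
Proof.
rewrite cat_uniq beta0_uniq /=. apply/andP; split.
  apply/hasPn => x /mapP[p _ ->]. exact: new_notin.
rewrite map_inj_uniq ?iota_uniq // => p q /eqP. rewrite eqn_add2l eqn_mul2r /=.
by rewrite addn2 orFb => /eqP.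
Qed.

Lemma beta_eq s i j : beta s i j = beta0 s i ++ [seq i + p * (s + 2) | p <- iota 0 j].
Proof. by rewrite /beta undup_id // B_uniq. Qed.

Lemma sum_new s i j : 2 * sumn [seq i + p * (s + 2) | p <- iota 0 j] = 2 * j * i + (s + 2) * (j * (j - 1)).
Proof.
elim: j => [|j IH]; first by rewrite !muln0.
rewrite -[j.+1]addn1 iotaD map_cat sumn_cat /= addn0 add0n.
rewrite addn1 subn1 /=.
have H2 : (s+2) * (j.+1 * j) = (s+2)*(j*(j-1)) + 2*j*(s+2).
  case: (j) => [|k]; first by rewrite !muln0. rewrite subn1 /=. lia.
rewrite H2. lia.
Qed.

Definition Q x := (x %/ 2 + x %% 2) * (x %/ 2 + 1).

Lemma sum_tri t m n : t < 2 * (m + n) ->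
  sumn [seq t - 2 * k | k <- iota m n] = Q (t - 2 * m).
Proof.
elim: n m => [|n IH] m /=.
  rewrite addn0 => h. have -> : t - 2 * m = 0 by lia. by [].
move=> h. rewrite IH; last lia.
rewrite /Q. have : t - 2 * m.+1 = t - 2 * m - 2 by lia.
move=> ->. set x := t - 2 * m. 
have [q [r [hr ->]]] : exists q r, r < 2 /\ x = 2 * q + r by exists (x %/ 2), (x %% 2); split; [rewrite ltn_mod | rewrite mulnC -divn_eq].
case: q => [|q].
  case: r hr => [|[|]] //.
have -> : 2 * q.+1 + r - 2 = 2 * q + r by lia.
rewrite !(mulnC 2) !divnMDl // !modnMDl !divn_small // !modn_small //. nia.
Qed.

Lemma size_beta0 s i : 1 <= i -> i < s -> size (beta0 s i) = Q (s - i - 1).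
Proof.
move=> h1 h2.
rewrite size_flatten /shape -map_comp.
rewrite (eq_map (g := fun k => (s - i - 1) - 2 * k)); last first.
  move=> k /=. rewrite size_iota. lia.
rewrite sum_tri; [by rewrite muln0 subn0 | lia].
Qed.
Lemma Pform s i j : 1 <= i -> i < s ->
  2 * psize (lambda s i j) + (Q (s - i - 1) + j) * (Q (s - i - 1) + j - 1)
  = 2 * sumn (beta0 s i) + (2 * j * i + (s + 2) * (j * (j - 1))).
Proof.
move=> h1 h2.
have U : uniq (beta s i j) by rewrite beta_eq B_uniq.
have A : all (fun y => 0 < y) (beta s i j).
  rewrite beta_eq all_cat; apply/andP; split.
    apply/allP => x /mem_beta0 [k hk]. lia.
  apply/allP => x /mapP[p _ ->]. lia.
rewrite /psize /lambda /partition_of_beta (undup_id U).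
have := @psum_gen (sort geq (beta s i j)).
rewrite sort_uniq U all_sort A size_sort.
have -> : sumn (sort geq (beta s i j)) = sumn (beta s i j) by apply: perm_sumn; rewrite perm_sort.
move=> /(_ (sort_sorted (fun x y => leq_total y x) _) isT isT) E.
have SZ : size (beta s i j) = Q (s - i - 1) + j by rewrite beta_eq size_cat size_map size_iota size_beta0.
have SM : 2 * sumn (beta s i j) = 2 * sumn (beta0 s i) + (2 * j * i + (s + 2) * (j * (j - 1))).
  by rewrite beta_eq sumn_cat mulnDr sum_new.
by rewrite -SZ E SM.
Qed.
Lemma fadd x e : (x + e) * (x + e - 1) = x * (x - 1) + 2 * x * e + e * (e - 1).
Proof.
have sq n : n <= n * n by case: n => // n; rewrite leq_pmulr.
have := sq x; have := sq e; have := sq (x + e).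
rewrite !mulnBr !muln1. lia.
Qed.

Lemma key q r i j e P0 PJ S0 F1 Fj s : r < 2 -> 1 <= i -> s = 2*q+r+i+1 ->
  2 * P0 + F1 = 2 * S0 + (2 * j * i + (s + 2) * Fj) ->
  2 * PJ + (F1 + 2 * ((q + r) * (q + 1) + j) * e + e * (e - 1))
  = 2 * S0 + (2 * (j+e) * i + (s + 2) * (Fj + 2 * j * e + e * (e - 1))) ->
  q + 1 = j + e ->
  2 * PJ = 2 * P0 + e * ((i - r) * (q + 2) + (s + 1) * j).
Proof.
move=> hr hi -> E1 E2.
case: e E2 => [|e] E2 hq.
  rewrite !muln0 !mul0n !addn0 in E2 *. lia.
have hq' : q = j + e by lia.
subst q.
rewrite subn1 /= in E2.
case: r hr E1 E2 => [|[|]] // _; case: i hi => [|i] // _ E1 E2; rewrite ?subn0 ?subSS ?subn0 /=; lia.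
Qed.
Theorem lemma3p3 (s i j : nat) :
  3 <= s -> 1 <= i <= s - 1 -> j <= (s - i + 1) %/ 2 ->
  psize (lambda s i j) <= psize (lambda s i ((s - i + 1) %/ 2)) /\
  (psize (lambda s i j) = psize (lambda s i ((s - i + 1) %/ 2)) <->
     j = (s - i + 1) %/ 2 \/ (odd s /\ i = 1 /\ j = 0)).
Proof.
move=> hs /andP[hi1 hi2] hj.
have his : i < s by lia.
set J := (s - i + 1) %/ 2.
set t := s - i - 1.
have ht : t = 2 * (t %/ 2) + t %% 2 by rewrite mulnC -divn_eq.
have hr : t %% 2 < 2 by rewrite ltn_mod.
have hQ : Q t = (t %/ 2 + t %% 2) * (t %/ 2 + 1) by [].
move: ht hr hQ. set q := t %/ 2. set r := t %% 2. move=> ht hr hQ.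
have hsq : s = 2 * q + r + i + 1 by lia.
have hJ : J = q + 1 by rewrite /J; lia.
have [e he] : exists e, J = j + e by exists (J - j); lia.
have E1 := Pform s i j hi1 his.
have E2 := Pform s i J hi1 his.
rewrite -/t hQ in E1 E2.
rewrite he addnA (fadd (_ + j) e) (fadd j e) in E2.
have K := @key q r i j e _ _ _ _ _ s hr hi1 hsq E1 E2 (etrans (esym hJ) he).
rewrite -he in K.
move: K. set P0 := psize (lambda s i j). set PJ := psize (lambda s i J). move=> K.
have hm := modn2 s.
split.
  move: K; generalize (e * ((i - r) * (q + 2) + (s + 1) * j)) => X; lia.
split.
  move=> hP. have : e * ((i - r) * (q + 2) + (s + 1) * j) = 0.
    move: K; generalize (e * ((i - r) * (q + 2) + (s + 1) * j)) => X; lia.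
  move/eqP; rewrite muln_eq0 addn_eq0 !muln_eq0 => /orP[/eqP e0|/andP[/orP[a|a] /orP[b|b]]]; first (left; lia).
  - move/eqP: a b => a /eqP b. right. case: (odd s) hm => hm; [lia | lia].
  - lia.
  - lia.
  - lia.
case=> [hjJ|[ho [i1 j0]]].
  have e0 : e = 0 by lia. move: K; rewrite e0 mul0n addn0; lia.
rewrite ho in hm. have r1 : r = 1 by lia.
move: K; rewrite i1 r1 j0 subnn mul0n !muln0 !addn0. lia.
Qed.
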